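(* Let $1\le k\le n-1$, let $I,J\in V_{k,n}$, and let $P_1,\dots,P_d$ be the connected components of $F_I\triangle F_J$, ordered by increasing column index. Let $\alpha_I,\alpha_J\in\{0,1\}^d$ be defined by $(\alpha_I)_m=1$ iff $P_m\subseteq F_I$ (and similarly for $J$), so that $\chi_I=\chi_{F_I\cap F_J}+\sum_m(\alpha_I)_m\chi_{P_m}$ and likewise for $J$. Then: (1) $I$ and $J$ are nonnesting if and only if $\{\alpha_I,\alpha_J\}=\{(0,\dots,0),(1,\dots,1)\}$; (2) $I$ and $J$ are noncrossing if and only if $\{\alpha_I,\alpha_J\}=\{(0,1,0,1,\dots),(1,0,1,0,\dots)\}$ (the two alternating vectors of length $d$).
   Context: $V_{k,n}$ denotes the set of integer vectors $I=(i_1,\dots,i_k)$ with $1\le i_1<\dots<i_k\le n$. Two arcs $(p<p')$, $(q<q')$ cross if $p<q<p'<q'$ or $q<p<q'<p'$; they nest if $p<q<q'<p'$ or $q<p<p'<q'$. $I,J$ are noncrossing if for all $1\le a<b\le k$ with $i_\ell=j_\ell$ for all $a<\ell<b$, the arcs $(i_a<i_b)$ and $(j_a<j_b)$ do not cross; they are nonnesting if for all $1\le a<b\le k$ these arcs do not nest. Let $P_{k,n}=\{(a,b):a\in[k],b\in[n-k]\}$ ($a$ = row, $b$ = column index), and for $I\in V_{k,n}$ let $F_I=\{(a,b)\in P_{k,n}: i_a\le a+b-1\}$ with characteristic vector $\chi_I$. The connected components of $S=F_I\triangle F_J$ are taken with respect to adjacency of positions differing by $1$ in exactly one coordinate; they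 occupy pairwise disjoint intervals of column indices, and are labeled $P_1,\dots,P_d$ from left (smallest column indices) to right. *)

(* Defs.v *)
From mathcomp Require Import all_boot.
Set Implicit Arguments. Unset Strict Implicit. Unset Printing Implicit Defensive.

(* A vector I = (i_1,...,i_k) is a seq nat; i_a (1-based) is nth 0 I (a-1). *)
Definition inV (k n : nat) (I : seq nat) : bool :=
  [&& size I == k, sorted ltn I & all (fun x => 0 < x <= n) I].

(* arcs (p < p') and (q < q') *)
Definition cross (p p' q q' : nat) : bool :=
  ((p < q) && (q < p') && (p' < q')) || ((q < p) && (p < q') && (q' < p')).
Definition nest (p p' q q' : nat) : bool :=
  ((p < q) && (q < q') && (q' < p')) || ((q < p) && (p < p') && (p' < q')).

(* 0-based indices a < b < k correspond to 1-based a+1 < b+1 <= k *)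
Definition noncrossing (k : nat) (I J : seq nat) : Prop :=
  forall a b, a < b < k ->
    (forall l, a < l < b -> nth 0 I l = nth 0 J l) ->
    ~~ cross (nth 0 I a) (nth 0 I b) (nth 0 J a) (nth 0 J b).

Definition nonnesting (k : nat) (I J : seq nat) : Prop :=
  forall a b, a < b < k ->
    ~~ nest (nth 0 I a) (nth 0 I b) (nth 0 J a) (nth 0 J b).

(* P_{k,n}: position (a,b) 0-based stands for (a+1,b+1) (row, column). *)
Definition pos (k n : nat) := ('I_k * 'I_(n - k))%type.

(* F_I = {(a,b) : i_a <= a + b - 1} in 1-based indices *)
Definition F (k n : nat) (I : seq nat) : {set pos k n} :=
  [set p : pos k n | nth 0 I p.1 <= p.1 + p.2 + 1].

Definition symd (k n : nat) (I J : seq nat) : {set pos k n} :=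
  (F k n I :\: F k n J) :|: (F k n J :\: F k n I).

Definition adj (k n : nat) (p q : pos k n) : bool :=
  ((p.1 == q.1) && ((p.2.+1 == q.2 :> nat) || (q.2.+1 == p.2 :> nat))) ||
  ((p.2 == q.2) && ((p.1.+1 == q.1 :> nat) || (q.1.+1 == p.1 :> nat))).

Definition adjS (k n : nat) (S : {set pos k n}) : rel (pos k n) :=
  fun p q => [&& p \in S, q \in S & adj p q].

Definition components (k n : nat) (S : {set pos k n}) : {set {set pos k n}} :=
  [set [set q | connect (adjS S) p q] | p in S].

Definition mincol (k n : nat) (C : {set pos k n}) : nat :=
  \big[minn/n]_(p in C) (p.2 : nat).

Definition comps (k n : nat) (I J : seq nat) : seq {set pos k n} :=
  sort (fun C D => mincol C <= mincol D) (enum (components (symd k n I J))).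

Definition alpha (k n : nat) (X I J : seq nat) : seq bool :=
  [seq (C \subset F k n X) | C : {set pos k n} <- comps k n I J].

Definition alt01 (d : nat) : seq bool := mkseq (fun m => odd m) d.
Definition alt10 (d : nat) : seq bool := mkseq (fun m => ~~ odd m) d.

(* Main.v *)
Require Import Defs.
From mathcomp Require Import all_boot zify.
Set Implicit Arguments. Unset Strict Implicit. Unset Printing Implicit Defensive.

Lemma pair_eqi (s A B : seq bool) :
  A = map negb B -> B = map negb A ->
  ([:: s; map negb s] =i [:: A; B]) <-> (s = A \/ s = B).
Proof.
move=> HA HB; split.
  by move=> /(_ s); rewrite !inE eqxx /= => /esym/orP[]/eqP; auto.
case=> ->; [rewrite -HB | rewrite -HA] => x; by rewrite !inE // orbC.
Qed.

Lemma nseq_neg m b : map negb (nseq m b) = nseq m (~~ b).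
Proof. by elim: m => //= m ->. Qed.

Lemma L1 (s : seq bool) :
  ([:: s; map negb s] =i [:: nseq (size s) false; nseq (size s) true]) <->
  (forall i j, i < size s -> j < size s -> nth false s i = nth false s j).
Proof.
rewrite pair_eqi ?nseq_neg //; split.
  by case=> -> i j Hi Hj; rewrite !nth_nseq; move: Hi Hj; rewrite size_nseq => -> ->.
move=> H.
have E : s = nseq (size s) (nth false s 0).
  apply: (@eq_from_nth _ false); rewrite ?size_nseq // => i Hi.
  rewrite nth_nseq Hi; apply: H => //; lia.
by case: (nth false s 0) E; auto.
Qed.

Lemma alt_neg01 m : map negb (alt01 m) = alt10 m.
Proof. by rewrite /alt01 /alt10 /mkseq -map_comp. Qed.
Lemma alt_neg10 m : map negb (alt10 m) = alt01 m.
Proof. by rewrite /alt01 /alt10 /mkseq -map_comp; apply: eq_map => i /=; rewrite negbK. Qed.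

Lemma L2 (s : seq bool) :
  ([:: s; map negb s] =i [:: alt01 (size s); alt10 (size s)]) <->
  (forall i, i.+1 < size s -> nth false s i != nth false s i.+1).
Proof.
rewrite pair_eqi ?alt_neg01 ?alt_neg10 //; split.
  move=> Hs i Hi.
  have Hi' : i < size s by lia.
  case: Hs => ->; rewrite /alt01 /alt10 !nth_mkseq //=; by case: (odd i).
move=> H.
have E : forall i, i < size s -> nth false s i = nth false s 0 (+) odd i.
  elim=> [|i IH] Hi; first by rewrite addbF.
  have := H i Hi; rewrite IH ?(ltnW Hi) //=.
  by case: (nth false s 0); case: (odd i); case: (nth false s i.+1).
case: (boolP (nth false s 0)) => H0; [right|left];
  apply: (@eq_from_nth _ false); rewrite ?size_mkseq // => i Hi;
  rewrite nth_mkseq // E //.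
  by rewrite H0.
by rewrite (negbTE H0).
Qed.

Lemma gapL s a b : sorted ltn s -> a <= b -> b < size s -> nth 0 s a + (b - a) <= nth 0 s b.
Proof.
move=> Hs Hab Hb; elim: b Hab Hb => [|b IH] Hab Hb.
  by move: Hab; rewrite leqn0 => /eqP ->; rewrite addn0.
case: (ltngtP a b.+1) Hab => // [Hlt|<-] _; last by rewrite subnn addn0.
have := IH Hlt (ltnW Hb).
have : nth 0 s b < nth 0 s b.+1 := sorted_ltn_nth ltn_trans 0 Hs b b.+1 (ltnW Hb) Hb (ltnSn b).
lia.
Qed.

Section Main.
Variables (k n : nat) (I J : seq nat).
Hypothesis Hk : 0 < k < n.
Hypothesis HI : inV k n I.
Hypothesis HJ : inV k n J.

Local Notation S := (symd k n I J).
Local Notation e := (adjS S).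

Lemma rowB X a : inV k n X -> a < k -> a < nth 0 X a /\ nth 0 X a + k <= n + a + 1.
Proof.
case/and3P=> /eqP Hs Hsort Hall Ha.
have H0 : 0 < nth 0 X 0.
  by have := all_nthP 0 Hall 0; rewrite Hs => /(_ (leq_ltn_trans (leq0n _) Ha)) /andP[].
have Hk1 : nth 0 X (k.-1) <= n.
  by have := all_nthP 0 Hall k.-1; rewrite Hs => /(_ ltac:(lia)) /andP[].
have := gapL Hsort (leq0n a) (ltac:(lia) : a < size X).
have := gapL Hsort (ltac:(lia) : a <= k.-1) (ltac:(lia) : k.-1 < size X).
lia.
Qed.

Lemma rowM X a b : inV k n X -> a < k -> b < k -> a <= b -> nth 0 X a + (b - a) <= nth 0 X b.
Proof.
case/and3P=> /eqP Hs Hsort _ Ha Hb Hab; apply: gapL => //; lia.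
Qed.

Lemma memS (p : pos k n) : p \in S <->
  (nth 0 I p.1 <= p.1 + p.2 + 1 < nth 0 J p.1) \/ (nth 0 J p.1 <= p.1 + p.2 + 1 < nth 0 I p.1).
Proof. rewrite /symd /F !inE /=; split; lia. Qed.

Lemma memF X (p : pos k n) : (p \in F k n X) = (nth 0 X p.1 <= p.1 + p.2 + 1).
Proof. by rewrite inE. Qed.

Lemma adjN (p q : pos k n) : adj p q =
  (((p.1 : nat) == q.1) && ((p.2.+1 == q.2) || (q.2.+1 == p.2))) ||
  (((p.2 : nat) == q.2) && ((p.1.+1 == q.1) || (q.1.+1 == p.1))).
Proof. by []. Qed.


Lemma k0 : 0 < k. Proof. by case/andP: Hk. Qed.
Lemma nk0 : 0 < n - k. Proof. case/andP: Hk => _; lia. Qed.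
Definition r0 : 'I_k := Ordinal k0.
Definition c0 : 'I_(n - k) := Ordinal nk0.
Definition mk (r c : nat) : pos k n := (insubd r0 r, insubd c0 c).
Lemma mk1 r c : r < k -> ((mk r c).1 : nat) = r.
Proof. by move=> H; rewrite /= val_insubd H. Qed.
Lemma mk2 r c : c < n - k -> ((mk r c).2 : nat) = c.
Proof. by move=> H; rewrite /= val_insubd H. Qed.

Ltac fcts p := have := ltn_ord p.1; have := ltn_ord p.2;
  have := rowB HI (ltn_ord p.1); have := rowB HJ (ltn_ord p.1).
Ltac fcts2 p q := have := rowM HI (ltn_ord p.1) (ltn_ord q.1);
  have := rowM HI (ltn_ord q.1) (ltn_ord p.1);
  have := rowM HJ (ltn_ord p.1) (ltn_ord q.1);
  have := rowM HJ (ltn_ord q.1) (ltn_ord p.1).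

Lemma pos_eq (x y : pos k n) : (x.1 : nat) = y.1 -> (x.2 : nat) = y.2 -> x = y.
Proof. by case: x y => [a b] [c d] /= /val_inj -> /val_inj ->. Qed.

Lemma Kconn d (x y : pos k n) : (y.1 - x.1) + (x.2 - y.2) = d -> x \in S -> y \in S ->
  x.1 <= y.1 -> y.2 <= x.2 -> connect e x y.
Proof.
elim: d x => [|d IH] x Hd Hx Hy H1 H2.
  by rewrite (@pos_eq x y) ?connect0 //; lia.
case: (ltnP y.2 x.2) => H3.
  pose x' := mk x.1 (x.2 - 1).
  have E1 : (x'.1 : nat) = x.1 by rewrite mk1.
  have E2 : (x'.2 : nat) = x.2 - 1 by rewrite mk2 //; have := ltn_ord x.2; lia.
  have Hx' : x' \in S.
    move/memS: Hx; move/memS: Hy => Hy Hx; apply/memS; rewrite E1 E2.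
    fcts x; fcts y; fcts2 x y; lia.
  apply: connect_trans (connect1 _) (IH x' _ Hx' Hy _ _); try lia.
  by apply/and3P; split => //; rewrite adjN; lia.
pose x' := mk x.1.+1 x.2.
have E1 : (x'.1 : nat) = x.1.+1 by rewrite mk1 //; fcts y; lia.
have E2 : (x'.2 : nat) = x.2 by rewrite mk2.
have Hx' : x' \in S.
  move/memS: Hx; move/memS: Hy => Hy Hx; apply/memS.
  fcts x; fcts y; fcts x'; fcts2 x' y; fcts2 x x'; fcts2 x y; lia.
apply: connect_trans (connect1 _) (IH x' _ Hx' Hy _ _); try lia.
by apply/and3P; split => //; rewrite adjN; lia.
Qed.


Lemma eS : symmetric e.
Proof.
move=> p q; rewrite /adjS; case: (p \in S); case: (q \in S) => //=.
by rewrite !adjN; apply/idP/idP; lia.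
Qed.
Lemma csym : connect_sym e. Proof. exact: sym_connect_sym eS. Qed.

Definition lt2 (p q : pos k n) := (p.1 < q.1) && (p.2 < q.2).

Lemma D0 x y : x \in S -> y \in S -> ~~ connect e x y -> lt2 x y || lt2 y x.
Proof.
move=> Hx Hy Hn; rewrite /lt2.
have Kxy : x.1 <= y.1 -> y.2 <= x.2 -> False.
  by move=> a b; rewrite (Kconn erefl Hx Hy a b) in Hn.
have Kyx : y.1 <= x.1 -> x.2 <= y.2 -> False.
  by move=> a b; rewrite csym (Kconn erefl Hy Hx a b) in Hn.
clear Hn Hx Hy; move: Kxy Kyx; case: x y => [a b] [c d] /=; move: (a:nat) (b:nat) (c:nat) (d:nat) => ????; lia.
Qed.

Lemma closed_lt x : x \in S -> closed e [pred z | lt2 z x || connect e x z].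
Proof.
move=> Hx.
suff H : forall z z', e z z' -> lt2 z x || connect e x z -> lt2 z' x || connect e x z'.
  by move=> z z' Hzz; rewrite !inE; apply/idP/idP; [apply: H | apply: H; rewrite eS].
move=> z z' Hzz /orP[Hlt|Hc]; last by apply/orP; right; exact: (connect_trans Hc (connect1 Hzz)).
case: (boolP (connect e x z')) => [Hc|Hn]; first by apply/orP; right.
have /and3P[Hz Hz' Ha] := Hzz.
have := D0 Hx Hz' Hn; move: Ha Hlt; rewrite adjN /lt2 => Ha Hlt H; apply/orP; left; move: Ha Hlt H.
case: x z z' {Hx Hzz Hz Hz' Hn} => [a b] [c d] [f g] /=; lia.
Qed.

Lemma closed_gt x : x \in S -> closed e [pred z | lt2 x z || connect e x z].
Proof.
move=> Hx.
suff H : forall z z', e z z' -> lt2 x z || connect e x z -> lt2 x z' || connect e x z'.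
  by move=> z z' Hzz; rewrite !inE; apply/idP/idP; [apply: H | apply: H; rewrite eS].
move=> z z' Hzz /orP[Hlt|Hc]; last by apply/orP; right; exact: (connect_trans Hc (connect1 Hzz)).
case: (boolP (connect e x z')) => [Hc|Hn]; first by apply/orP; right.
have /and3P[Hz Hz' Ha] := Hzz.
have := D0 Hx Hz' Hn; move: Ha Hlt; rewrite adjN /lt2 => Ha Hlt H; apply/orP; left; move: Ha Hlt H.
case: x z z' {Hx Hzz Hz Hz' Hn} => [a b] [c d] [f g] /=; lia.
Qed.

Definition comp (p : pos k n) : {set pos k n} := [set q | connect e p q].

Lemma compsP C : C \in components S -> exists2 p, p \in S & C = comp p.
Proof. by case/imsetP => p Hp ->; exists p. Qed.

Lemma comp_in p q : (q \in comp p) = connect e p q.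
Proof. by rewrite inE. Qed.

Lemma comp_self p : p \in comp p.
Proof. by rewrite comp_in connect0. Qed.

Lemma comp_mem p : p \in S -> comp p \in components S.
Proof. by move=> Hp; apply/imsetP; exists p. Qed.

Lemma closedS : closed e S.
Proof. by move=> p q /and3P[-> -> _]. Qed.

Lemma connS p q : connect e p q -> p \in S -> q \in S.
Proof. by move=> H; rewrite (closed_connect closedS H). Qed.

Lemma comp_eq p q : connect e p q -> comp p = comp q.
Proof. by move=> H; apply/setP => z; rewrite !inE; exact: (same_connect csym H z). Qed.

Lemma closedFI : closed e (F k n I).
Proof.
move=> p q /and3P[Hp Hq Ha]; move/memS: Hp; move/memS: Hq; rewrite !memF; rewrite adjN in Ha.
fcts p; fcts q; fcts2 p q; case: p q Ha => [a c] [b d] /=; move: (nat_of_ord a) (nat_of_ord b) (nat_of_ord c) (nat_of_ord d) => ? ? ? ? *. apply/idP/idP; lia.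
Qed.

Lemma FJneg p : p \in S -> (p \in F k n J) = ~~ (p \in F k n I).
Proof. by move/memS; rewrite !memF; lia. Qed.

Lemma signI C p : C \in components S -> p \in C -> (C \subset F k n I) = (p \in F k n I).
Proof.
case/compsP => r Hr ->; rewrite comp_in => Hrp; apply/subsetP/idP.
  by move=> H; apply: H; rewrite comp_in.
move=> Hp q; rewrite comp_in => Hrq.
by rewrite -(closed_connect closedFI Hrq) (closed_connect closedFI Hrp).
Qed.

Lemma signJ C : C \in components S -> (C \subset F k n J) = ~~ (C \subset F k n I).
Proof.
move=> HC; have [r Hr EC] := compsP HC.
have Hrc : r \in C by rewrite EC comp_self.
rewrite (signI HC Hrc) -(FJneg Hr).
apply/subsetP/idP; first by move=> H; apply: H.
move=> Hp q; rewrite EC comp_in => Hrq.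
have Hq : q \in S := connS Hrq Hr.
by rewrite (FJneg Hq) -(closed_connect closedFI Hrq) -(FJneg Hr).
Qed.


Definition rw (p : pos k n) : nat := p.1.
Definition cl (p : pos k n) : nat := p.2.

Lemma memS' p : p \in S <->
  (nth 0 I (rw p) <= rw p + cl p + 1 < nth 0 J (rw p)) \/ (nth 0 J (rw p) <= rw p + cl p + 1 < nth 0 I (rw p)).
Proof. exact: memS. Qed.
Lemma rwk p : rw p < k. Proof. exact: ltn_ord. Qed.
Lemma clk p : cl p < n - k. Proof. exact: ltn_ord. Qed.

Lemma sideS p : p \in S -> (p \in F k n I) = (nth 0 I (rw p) < nth 0 J (rw p)).
Proof. move/memS'; rewrite memF -/(rw p) -/(cl p) => H; apply/idP/idP; lia. Qed.
Lemma rowNZ p : p \in S -> nth 0 I (rw p) != nth 0 J (rw p).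
Proof. move/memS' => H; lia. Qed.

Lemma cellr a : a < k -> nth 0 I a != nth 0 J a ->
  exists x : pos k n, [/\ x \in S, rw x = a & (x \in F k n I) = (nth 0 I a < nth 0 J a)].
Proof.
move=> Ha Hne.
have := rowB HI Ha; have := rowB HJ Ha => B1 B2.
have Hc : minn (nth 0 I a) (nth 0 J a) - a.+1 < n - k by lia.
exists (mk a (minn (nth 0 I a) (nth 0 J a) - a.+1)).
have E1 : rw (mk a (minn (nth 0 I a) (nth 0 J a) - a.+1)) = a by rewrite /rw mk1.
have E2 : cl (mk a (minn (nth 0 I a) (nth 0 J a) - a.+1)) = minn (nth 0 I a) (nth 0 J a) - a.+1 by rewrite /cl mk2.
have HS : mk a (minn (nth 0 I a) (nth 0 J a) - a.+1) \in S by apply/memS'; rewrite E1 E2; lia.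
by split => //; rewrite sideS // E1.
Qed.

Lemma same_row p q : p \in S -> q \in S -> rw p = rw q -> connect e p q.
Proof.
move=> Hp Hq E; case: (leqP (cl q) (cl p)) => H.
  by apply: (Kconn erefl) => //; rewrite -/(rw p) -/(rw q) ?E.
rewrite csym; apply: (Kconn erefl) => //; rewrite -/(rw p) -/(rw q) ?E //.
by rewrite -/(cl p) -/(cl q) ltnW.
Qed.

Definition L := comps k n I J.
Lemma memL C : (C \in L) = (C \in components S).
Proof. by rewrite /L /comps mem_sort mem_enum. Qed.
Lemma uniqL : uniq L. Proof. by rewrite /L /comps sort_uniq enum_uniq. Qed.
Lemma sortedL : sorted (fun C D => mincol C <= mincol D) L.
Proof. by apply: sort_sorted => C D; exact: leq_total. Qed.
Lemma nthL i : i < size L -> nth set0 L i \in components S.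
Proof. by move=> H; rewrite -memL mem_nth. Qed.
Lemma idxL C : C \in components S -> exists2 i, i < size L & nth set0 L i = C.
Proof. by rewrite -memL => H; exists (index C L); rewrite ?index_mem ?nth_index. Qed.

Definition before (C D : {set pos k n}) := forall p q, p \in C -> q \in D -> lt2 p q.

Lemma before_of c d : c \in S -> d \in S -> ~~ connect e c d -> lt2 c d -> before (comp c) (comp d).
Proof.
move=> Hc Hd Hn Hlt p q; rewrite !comp_in => Hp Hq.
have HqS : q \in S := connS Hq Hd.
have Hcq : lt2 c q.
  have := closed_connect (closed_gt Hc) Hq; rewrite !inE Hlt /= => /esym /orP[//|Hcq].
  by case/negP: Hn; apply: connect_trans Hcq _; rewrite csym.
have := closed_connect (closed_lt HqS) Hp; rewrite !inE Hcq /= => /esym /orP[//|Hqp].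
case/negP: Hn; apply: connect_trans Hp _; apply: connect_trans (_ : connect e p q) _.
  by rewrite csym.
by rewrite csym.
Qed.

Lemma comp_order C D : C \in components S -> D \in components S -> C != D ->
  before C D \/ before D C.
Proof.
move=> HC HD HCD; have [c Hc EC] := compsP HC; have [d Hd ED] := compsP HD.
have Hn : ~~ connect e c d by apply: contra HCD => H; rewrite EC ED (comp_eq H).
have Hn' : ~~ connect e d c by rewrite csym.
rewrite EC ED; case/orP: (D0 Hc Hd Hn) => Hlt; [left|right]; exact: before_of.
Qed.

Lemma bigmin_le (T : eqType) (s : seq T) (P : pred T) (F0 : T -> nat) x c :
  c \in s -> P c -> \big[minn/x]_(i <- s | P i) F0 i <= F0 c.
Proof.
elim: s => // y s IH; rewrite inE big_cons => /orP[/eqP <- ->|Hc Pc]; first exact: geq_minl.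
case: (P y); last exact: IH.
exact: leq_trans (geq_minr _ _) (IH Hc Pc).
Qed.

Lemma mincol_lt C D : C \in components S -> before C D -> mincol C < mincol D.
Proof.
move=> HC Hb; have [c Hc EC] := compsP HC.
have HcC : c \in C by rewrite EC comp_self.
apply: (@leq_ltn_trans c.2).
  by rewrite /mincol; apply: bigmin_le; rewrite ?mem_index_enum.
rewrite /mincol; apply: (big_ind (fun v => c.2 < v)).
- have := ltn_ord c.2; lia.
- by move=> x y Hx Hy; rewrite leq_min Hx Hy.
- by move=> q Hq; have /andP[] := Hb c q HcC Hq.
Qed.

Lemma before_idx i j : i < size L -> j < size L ->
  before (nth set0 L i) (nth set0 L j) -> i < j.
Proof.
move=> Hi Hj Hb; have := mincol_lt (nthL Hi) Hb; rewrite ltnNge => H; rewrite ltnNge; apply/negP => Hji; move/negP: H; apply.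
have := @sorted_leq_nth _ (fun C D : {set pos k n} => mincol C <= mincol D)
  (fun _ _ _ H1 H2 => leq_trans H1 H2) (fun _ => leqnn _) set0 L sortedL j i Hj Hi Hji.
done.
Qed.

Lemma nth_neq i j : i < size L -> j < size L -> i != j -> nth set0 L i != nth set0 L j.
Proof. by move=> Hi Hj H; rewrite nth_uniq // uniqL. Qed.


Definition aI := [seq (C \subset F k n I) | C : {set pos k n} <- L].
Lemma nth_aI i : i < size L -> nth false aI i = (nth set0 L i \subset F k n I).
Proof. by move=> H; rewrite (nth_map set0). Qed.

Lemma inC_S C p : C \in components S -> p \in C -> p \in S.
Proof. by case/compsP => c Hc -> ; rewrite comp_in => H; exact: connS H Hc. Qed.

Lemma signL i p : i < size L -> p \in nth set0 L i ->
  nth false aI i = (nth 0 I (rw p) < nth 0 J (rw p)).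
Proof.
move=> Hi Hp; rewrite nth_aI // (signI (nthL Hi) Hp) sideS //.
exact: inC_S (nthL Hi) Hp.
Qed.

Lemma rootL i : i < size L -> exists2 c, c \in S & c \in nth set0 L i.
Proof. by move=> Hi; have [c Hc ->] := compsP (nthL Hi); exists c; rewrite ?comp_self. Qed.

Lemma nestN a b : a < b -> b < k -> nth 0 I a != nth 0 J a -> nth 0 I b != nth 0 J b ->
  (nth 0 I a < nth 0 J a) != (nth 0 I b < nth 0 J b) ->
  nest (nth 0 I a) (nth 0 I b) (nth 0 J a) (nth 0 J b).
Proof.
move=> Hab Hb; have Ha : a < k by lia.
have := rowM HI Ha Hb (ltnW Hab); have := rowM HJ Ha Hb (ltnW Hab).
rewrite /nest; move: (nth 0 I a) (nth 0 J a) (nth 0 I b) (nth 0 J b) => ? ? ? ? *; lia.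
Qed.

Lemma T1 : nonnesting k I J <->
  (forall i j, i < size L -> j < size L -> nth false aI i = nth false aI j).
Proof.
split.
  move=> NN i j Hi Hj.
  case: (boolP (nth false aI i == nth false aI j)) => [/eqP//|Hne]; exfalso.
  have [c Hc HcC] := rootL Hi; have [d Hd HdD] := rootL Hj.
  rewrite (signL Hi HcC) (signL Hj HdD) in Hne.
  have := rowNZ Hc; have := rowNZ Hd => Nd Nc.
  case: (ltngtP (rw c) (rw d)) => Hcd.
  - have := NN (rw c) (rw d); rewrite Hcd rwk => /(_ isT) /negP; apply.
    exact: nestN Hcd (rwk d) Nc Nd Hne.
  - have := NN (rw d) (rw c); rewrite Hcd rwk => /(_ isT) /negP; apply.
    by apply: nestN Hcd (rwk c) Nd Nc _; rewrite eq_sym.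
  - by rewrite Hcd eqxx in Hne.
move=> H a b /andP[Hab Hbk]; apply/negP => Hn.
have Ha : a < k by lia.
have := rowM HI Ha Hbk (ltnW Hab); have := rowM HJ Ha Hbk (ltnW Hab) => M1 M2.
have nza : nth 0 I a != nth 0 J a by move: Hn M1 M2; rewrite /nest; move: (nth 0 I a) (nth 0 J a) (nth 0 I b) (nth 0 J b) => ? ? ? ? *; lia.
have nzb : nth 0 I b != nth 0 J b by move: Hn M1 M2; rewrite /nest; move: (nth 0 I a) (nth 0 J a) (nth 0 I b) (nth 0 J b) => ? ? ? ? *; lia.
have sg : (nth 0 I a < nth 0 J a) != (nth 0 I b < nth 0 J b) by move: Hn M1 M2; rewrite /nest; move: (nth 0 I a) (nth 0 J a) (nth 0 I b) (nth 0 J b) => ? ? ? ? *; lia.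
have [x [Hx Ex _]] := cellr Ha nza; have [y [Hy Ey _]] := cellr Hbk nzb.
have [i Hi Ei] := idxL (comp_mem Hx); have [j Hj Ej] := idxL (comp_mem Hy).
have := H i j Hi Hj.
rewrite (signL Hi (_ : x \in nth set0 L i)) ?Ei ?comp_self //.
rewrite (signL Hj (_ : y \in nth set0 L j)) ?Ej ?comp_self // Ex Ey => E.
by rewrite E eqxx in sg.
Qed.


Lemma rowM2 X a b : inV k n X -> a < k -> b < k ->
  (a <= b -> nth 0 X a + (b - a) <= nth 0 X b) /\ (b <= a -> nth 0 X b + (a - b) <= nth 0 X a).
Proof. by move=> HX Ha Hb; split; apply: rowM. Qed.
Ltac mm Ha Hb := have := rowM2 HI Ha Hb; have := rowM2 HJ Ha Hb.

Lemma adjR (p q : pos k n) : adj p q =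
  ((rw p == rw q) && (((cl p).+1 == cl q) || ((cl q).+1 == cl p))) ||
  ((cl p == cl q) && (((rw p).+1 == rw q) || ((rw q).+1 == rw p))).
Proof. by []. Qed.

Lemma ltrw p q : lt2 p q -> rw p < rw q.
Proof. by case/andP. Qed.

Lemma comp_eqC C D x y : C \in components S -> D \in components S -> x \in C -> y \in D ->
  connect e x y -> C = D.
Proof.
case/compsP=> c Hc -> ; case/compsP=> d Hd ->; rewrite !comp_in => Hx Hy Hxy.
rewrite (comp_eq Hx) (comp_eq Hy); exact: comp_eq.
Qed.

Ltac clear_heavy := repeat match goal with
 | H : is_true (_ \in _) |- _ => clear H
 | H : is_true (~~ (@eq_op _ ?a _)) |- _ => lazymatch type of a with nat => fail | _ => clear H end
 | H : @eq bool (nth false _ _) _ |- _ => clear H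
 | H : before _ _ |- _ => clear H
 | H : closed _ _ |- _ => clear H
 | H : forall p : pos k n, _ |- _ => clear H
 | H : is_true (connect _ _ _) |- _ => clear H
 | H : is_true (~~ connect _ _ _) |- _ => clear H
 end.
Ltac hlia := clear_heavy; lia.

Lemma T2 : noncrossing k I J <->
  (forall i, i.+1 < size L -> nth false aI i != nth false aI i.+1).
Proof.
split.
  move=> NC i Hi1; have Hi : i < size L by hlia.
  apply/negP => /eqP Hsg.
  set C := nth set0 L i; set D := nth set0 L i.+1.
  have HC := nthL Hi; have HD := nthL Hi1.
  have HCD : C != D by apply: nth_neq => //; rewrite neq_ltn ltnSn.
  have Hb : before C D.
    by case: (comp_order HC HD HCD) => // H; have := before_idx Hi1 Hi H; hlia.
  have [c0 _ Hc0] := rootL Hi; have [d0 _ Hd0] := rootL Hi1.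
  have [x Hx Hmx] : exists2 x, x \in C & forall p, p \in C -> rw p <= rw x.
    by case: (@arg_maxnP _ c0 (mem C) rw Hc0) => x Hx Hm; exists x.
  have [y Hy Hmy] : exists2 y, y \in D & forall p, p \in D -> rw y <= rw p.
    by case: (@arg_minnP _ d0 (mem D) rw Hd0) => y Hy Hm; exists y.
  have HxS := inC_S HC Hx; have HyS := inC_S HD Hy.
  have Hxy : rw x < rw y by apply: ltrw; exact: Hb.
  have Esg : (nth 0 I (rw x) < nth 0 J (rw x)) = (nth 0 I (rw y) < nth 0 J (rw y)).
    by rewrite -(signL Hi Hx) -(signL Hi1 Hy).
  have Hbet : forall l, rw x < l < rw y -> nth 0 I l = nth 0 J l.
    move=> l /andP[H1 H2]; case: (eqVneq (nth 0 I l) (nth 0 J l)) => // Hne; exfalso.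
    have Hl : l < k by have := rwk y; hlia.
    have [z [Hz Ez _]] := cellr Hl Hne.
    have HE := comp_mem Hz.
    have [j Hj Ej] := idxL HE.
    have HzE : z \in nth set0 L j by rewrite Ej comp_self.
    have HEC : nth set0 L j != C.
      by apply/eqP => E; rewrite E in HzE; have := Hmx z HzE; hlia.
    have HED : nth set0 L j != D.
      by apply/eqP => E; rewrite E in HzE; have := Hmy z HzE; hlia.
    have B1 : before C (nth set0 L j).
      case: (comp_order HC (nthL Hj) (_ : C != nth set0 L j)) => //; first by rewrite eq_sym.
      by move=> H; have := ltrw (H z x HzE Hx); hlia.
    have B2 : before (nth set0 L j) D.
      case: (comp_order (nthL Hj) HD HED) => // H.
      by have := ltrw (H y z Hy HzE); hlia.
    by have := before_idx Hi Hj B1; have := before_idx Hj Hi1 B2; hlia.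
  have := NC (rw x) (rw y); rewrite Hxy rwk => /(_ isT Hbet) Hnc.
  have NZx := rowNZ HxS; have NZy := rowNZ HyS.
  have Hxk := rwk x; have Hyk := rwk y.
  move: Hnc; rewrite /cross => Hnc.
  case: (ltngtP (rw x).+1 (rw y)) => Hcase.
  - have Hx1 : (rw x).+1 < k by hlia.
    have := Hbet (rw x).+1; rewrite ltnSn Hcase => /(_ isT).
    mm Hxk Hx1; mm Hx1 Hyk; mm Hxk Hyk.
    move=> *.
    hlia.
  - hlia.
  - set a := rw x in Hcase Esg NZx Hxk Hnc Hbet Hxy *.
    have := rowB HI Hxk; have := rowB HJ Hxk => B1 B2.
    set cc := maxn (nth 0 I a) (nth 0 J a) - a.+2.
    have Hcc : cc < n - k by rewrite /cc; hlia.
    have Eu1 : rw (mk a cc) = a by rewrite /rw mk1.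
    have Eu2 : cl (mk a cc) = cc by rewrite /cl mk2.
    have Ev1 : rw (mk (rw y) cc) = rw y by rewrite /rw mk1.
    have Ev2 : cl (mk (rw y) cc) = cc by rewrite /cl mk2.
    have Hu : mk a cc \in S.
      apply/memS'; rewrite Eu1 Eu2 /cc; rewrite -Hcase in Esg NZy Hnc *.
      hlia.
    have Hv : mk (rw y) cc \in S.
      apply/memS'; rewrite Ev1 Ev2 /cc.
      have := rowM2 HI Hxk Hyk; have := rowM2 HJ Hxk Hyk.
      rewrite -Hcase in Esg NZy Hnc *; move=> *; hlia.
    have Huv : e (mk a cc) (mk (rw y) cc).
      apply/and3P; split => //; rewrite adjR Eu1 Eu2 Ev1 Ev2; hlia.
    have Hc : connect e x y.
      apply: connect_trans (same_row HxS Hu _) _; first by rewrite Eu1.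
      apply: connect_trans (connect1 Huv) (same_row Hv HyS _).
      by rewrite Ev1.
    by move/eqP: HCD; apply; apply: comp_eqC HC HD Hx Hy Hc.
move=> Halt a b /andP[Hab Hbk] Hbet; apply/negP => Hcr.
have Ha : a < k by hlia.
have [M1 M2] := rowM2 HI Ha Hbk; have [M3 M4] := rowM2 HJ Ha Hbk.
have nza : nth 0 I a != nth 0 J a.
  move: Hcr M1 M2 M3 M4; rewrite /cross; move: (nth 0 I a) (nth 0 J a) (nth 0 I b) (nth 0 J b) => ? ? ? ? *; hlia.
have nzb : nth 0 I b != nth 0 J b.
  move: Hcr M1 M2 M3 M4; rewrite /cross; move: (nth 0 I a) (nth 0 J a) (nth 0 I b) (nth 0 J b) => ? ? ? ? *; hlia.
have sg : (nth 0 I a < nth 0 J a) = (nth 0 I b < nth 0 J b).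
  move: Hcr M1 M2 M3 M4; rewrite /cross; move: (nth 0 I a) (nth 0 J a) (nth 0 I b) (nth 0 J b) => ? ? ? ? *.
  apply/idP/idP; hlia.
have [x [Hx Ex _]] := cellr Ha nza; have [y [Hy Ey _]] := cellr Hbk nzb.
have Ha1 : a.+1 < k by hlia.
have Hcl : closed e [pred z | rw z <= a].
  suff H : forall z z', e z z' -> rw z <= a -> a < rw z' -> False.
    move=> z z' Hzz; rewrite !inE; case: (leqP (rw z) a) => H1; case: (leqP (rw z') a) => H2 //.
    - by case: (H z z' Hzz H1 H2).
    - by rewrite eS in Hzz; case: (H z' z Hzz H2 H1).
  move=> z z' /and3P[Hz Hz' Hzz] H1 H2.
  rewrite adjR in Hzz.
  have E1 : rw z = a by move: Hzz; hlia.
  have E2 : rw z' = a.+1 by move: Hzz; hlia.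
  have E3 : cl z' = cl z by move: Hzz; hlia.
  move/memS': Hz; move/memS': Hz'; rewrite E1 E2 E3 => Hz' Hz.
  move: Hcr; rewrite /cross => Hcr.
  case: (ltngtP a.+1 b) => Hc.
  - by have := Hbet a.+1; rewrite ltnSn Hc => /(_ isT) Heq; hlia.
  - hlia.
  - by rewrite Hc in Hz'; hlia.
have Hnc : ~~ connect e x y.
  by apply/negP => Hc; have := closed_connect Hcl Hc; rewrite !inE Ex Ey leqnn; hlia.
have HC := comp_mem Hx; have HD := comp_mem Hy.
have HCD : comp x != comp y.
  by apply/negP => /eqP E; move: (comp_self y); rewrite -E comp_in; apply/negP.
have Hb : before (comp x) (comp y).
  case: (comp_order HC HD HCD) => // H.
  by have := ltrw (H y x (comp_self y) (comp_self x)); rewrite Ex Ey; hlia.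
have [ic Hic Eic] := idxL HC; have [id Hid Eid] := idxL HD.
have Hlt : ic < id by apply: before_idx; rewrite ?Eic ?Eid.
have := Halt ic ltac:(hlia).
have sgc : nth false aI ic = (nth 0 I a < nth 0 J a).
  by rewrite (signL Hic (_ : x \in nth set0 L ic)) ?Eic ?comp_self // Ex.
have sgd : nth false aI id = (nth 0 I b < nth 0 J b).
  by rewrite (signL Hid (_ : y \in nth set0 L id)) ?Eid ?comp_self // Ey.
case: (ltngtP ic.+1 id) => Hcase.
- move=> _.
  have Hic1 : ic.+1 < size L by hlia.
  have HE := nthL Hic1.
  have HEC : nth set0 L ic.+1 != comp x by rewrite -Eic; apply: nth_neq => //; hlia.
  have HED : nth set0 L ic.+1 != comp y by rewrite -Eid; apply: nth_neq => //; hlia.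
  have B1 : before (comp x) (nth set0 L ic.+1).
    case: (comp_order HC HE (_ : comp x != nth set0 L ic.+1)) => //; first by rewrite eq_sym.
    by rewrite -Eic => H; have := before_idx Hic1 Hic H; hlia.
  have B2 : before (nth set0 L ic.+1) (comp y).
    case: (comp_order HE HD HED) => //.
    by rewrite -Eid => H; have := before_idx Hid Hic1 H; hlia.
  have [z Hz HzE] := rootL Hic1.
  have := ltrw (B1 x z (comp_self x) HzE); have := ltrw (B2 z y HzE (comp_self y)).
  rewrite Ex Ey => H1 H2.
  have := Hbet (rw z); rewrite H1 H2 => /(_ isT) /eqP.
  by rewrite (negbTE (rowNZ Hz)).
- hlia.
- by rewrite Hcase sgc sgd sg eqxx.
Qed.

End Main.

Theorem lemma4p11 (k n : nat) (I J : seq nat) :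
  0 < k < n -> inV k n I -> inV k n J ->
  let d := size (comps k n I J) in
  let aI := alpha k n I I J in
  let aJ := alpha k n J I J in
  (nonnesting k I J <-> [:: aI; aJ] =i [:: nseq d false; nseq d true]) /\
  (noncrossing k I J <-> [:: aI; aJ] =i [:: alt01 d; alt10 d]).
Proof.
move=> Hk HI HJ d aI0 aJ0.
have EI : aI0 = aI k n I J by [].
have EJ : aJ0 = map negb (aI k n I J).
  rewrite /aJ0 /alpha /aI /L -map_comp; apply/eq_in_map => C HC /=.
  by rewrite (signJ Hk HI HJ) // -memL.
have Ed : d = size (aI k n I J) by rewrite size_map.
rewrite EI EJ Ed; split.
  by rewrite L1 size_map; exact: T1.
by rewrite L2 size_map; exact: T2.
Qed.
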